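(* Let $\mathcal{E}=\{\eta_i,\rho_i\}_{i=1}^n$ be an $m$-party quantum state ensemble and let $x\in\{1,\dots,n\}$. Then $p_{\sf L}(\mathcal{E})=\eta_x$ if and only if $\eta_x\rho_x-\eta_i\rho_i\in\mathbb{SEP}^*$ for all $i=1,\dots,n$. Moreover, in this case $p_{\sf L}(\mathcal{E})=p_{\sf SEP}(\mathcal{E})$.
   Context: Let $\mathcal{H}=\bigotimes_{k=1}^m\mathbb{C}^{d_k}$ with $m,d_1,\dots,d_m\ge 2$, shared among parties $\mathsf{A}_1,\dots,\mathsf{A}_m$ (party $\mathsf{A}_k$ holds the factor $\mathbb{C}^{d_k}$). $\mathbb{H}$ denotes the Hermitian operators on $\mathcal{H}$, $\mathbb{H}_+$ the positive semidefinite ones. A state is $\rho\in\mathbb{H}_+$ with $\operatorname{Tr}\rho=1$; a measurement is a family $\{M_i\}\subseteq\mathbb{H}_+$ with $\sum_i M_i=\mathbb{1}$. An operator $E\in\mathbb{H}_+$ is separable if $E=\sum_s\bigotimes_{k=1}^m E_{s,k}$ with each $E_{s,k}$ positive semidefinite on $\mathbb{C}^{d_k}$; $\mathbb{SEP}$ is the set of separable operators. $E\in\mathbb{H}$ is block positive if $\operatorname{Tr}(E\sigma)\ge 0$ for every separable state $\sigma$; $\mathbb{SEP}^*$ is the set of block-positive operators. A measurement is separable if all its elements are separable, and LOCC if it can be realized by local operations and classical communication among $\mathsf{A}_1,\dots,\mathsf{A}_m$. An ensemble $\mathcal{E}=\{\eta_i,\rho_i\}_{i=1}^n$ consists of states $\rho_i$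 with nonzero probabilities $\eta_i$ summing to $1$. For a measurement $\{M_i\}_{i=1}^n$ the success probability is $\sum_i\eta_i\operatorname{Tr}(\rho_iM_i)$; $p_{\sf G}(\mathcal{E})$, $p_{\sf SEP}(\mathcal{E})$, $p_{\sf L}(\mathcal{E})$ denote its maximum over all measurements, all separable measurements, and all LOCC measurements, respectively. *)

(* Defs.v *)
From HB Require Import structures.
From mathcomp Require Import all_boot all_order all_algebra.
From mathcomp Require Import complex.
From mathcomp Require Import classical_sets reals.
Set Implicit Arguments.
Unset Strict Implicit.
Unset Printing Implicit Defensive.
Import Order.TTheory GRing.Theory Num.Theory.
Local Open Scope ring_scope.
Local Open Scope complex_scope.

Section QDefs.
Variable R : realType.
Local Notation C := R[i].

Definition op (I : finType) := I -> I -> C.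

Definition op0 (I : finType) : op I := fun _ _ => 0.
Definition op1 (I : finType) : op I := fun i j => (i == j)%:R.
Definition opadd (I : finType) (A B : op I) : op I := fun i j => A i j + B i j.
Definition opsum (I : finType) (J : finType) (F : J -> op I) : op I :=
  fun i j => \sum_(s : J) F s i j.
Definition opmul (I : finType) (A B : op I) : op I :=
  fun i j => \sum_(l : I) A i l * B l j.
Definition adj (I : finType) (A : op I) : op I := fun i j => (A j i)^*.
Definition trace (I : finType) (A : op I) : C := \sum_(i : I) A i i.

Definition herm (I : finType) (A : op I) : Prop := forall i j, A j i = (A i j)^*.
Definition psd (I : finType) (A : op I) : Prop :=
  herm A /\ forall v : I -> C, 0 <= \sum_(i : I) \sum_(j : I) (v i)^* * A i j * v j.

(* Multipartite Hilbert space  C^{d_1} (x) ... (x) C^{d_m}: basis indexed by tuples *)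
Definition idx (m : nat) (d : 'I_m -> nat) : finType :=
  {dffun forall k : 'I_m, 'I_(d k)}.

Definition tens (m : nat) (d : 'I_m -> nat) (A : forall k : 'I_m, op 'I_(d k))
  : op (idx d) := fun i j => \prod_(k : 'I_m) A k (i k) (j k).

(* local operator K acting on party k, identity on the others: 1 (x) .. K .. (x) 1 *)
Definition embed (m : nat) (d : 'I_m -> nat) (k : 'I_m) (K : op 'I_(d k))
  : op (idx d) :=
  fun i j => K (i k) (j k) * \prod_(l : 'I_m | l != k) (i l == j l)%:R.

Definition separable (m : nat) (d : 'I_m -> nat) (E : op (idx d)) : Prop :=
  exists (S : nat) (F : 'I_S -> forall k : 'I_m, op 'I_(d k)),
    (forall s k, psd (F s k)) /\ E = opsum (fun s => tens (F s)).

Definition is_state (I : finType) (rho : op I) : Prop := psd rho /\ trace rho = 1.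

Definition block_positive (m : nat) (d : 'I_m -> nat) (E : op (idx d)) : Prop :=
  herm E /\ forall sigma : op (idx d), separable sigma -> is_state sigma ->
    0 <= trace (opmul E sigma).

Definition ensemble (I : finType) (n : nat) (eta : 'I_n -> R) (rho : 'I_n -> op I)
  : Prop :=
  (forall i, 0 < eta i) /\ \sum_(i < n) eta i = 1 /\ (forall i, is_state (rho i)).

Definition measurement (I : finType) (n : nat) (M : 'I_n -> op I) : Prop :=
  (forall i, psd (M i)) /\ opsum M = @op1 I.

Definition sep_measurement (m : nat) (d : 'I_m -> nat) (n : nat)
  (M : 'I_n -> op (idx d)) : Prop :=
  measurement M /\ forall i, separable (M i).

(* LOCC protocols (finite number of rounds): at each node some party k performs a
   local quantum instrument with Kraus operators K_0..K_{J-1} on C^{d_k},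
   broadcasts the outcome j, and the protocol continues with next j; leaves
   carry the final guess. *)
Inductive locc_proto (m : nat) (d : 'I_m -> nat) (n : nat) : Type :=
| LLeaf of 'I_n
| LNode (k : 'I_m) (J : nat) of ('I_J -> op 'I_(d k)) & ('I_J -> locc_proto d n).

Fixpoint locc_valid (m : nat) (d : 'I_m -> nat) (n : nat) (p : locc_proto d n)
  : Prop :=
  match p with
  | LLeaf _ => True
  | LNode k J K next =>
      opsum (fun j => opmul (adj (K j)) (K j)) = @op1 'I_(d k) /\
      forall j, locc_valid (next j)
  end.

Fixpoint locc_effect (m : nat) (d : 'I_m -> nat) (n : nat) (p : locc_proto d n)
  (i : 'I_n) : op (idx d) :=
  match p with
  | LLeaf l => if l == i then @op1 (idx d) else @op0 (idx d)
  | LNode k J K next =>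
      opsum (fun j => opmul (adj (embed (K j)))
                            (opmul (locc_effect (next j) i) (embed (K j))))
  end.

Definition locc_measurement (m : nat) (d : 'I_m -> nat) (n : nat)
  (M : 'I_n -> op (idx d)) : Prop :=
  exists p : locc_proto d n, locc_valid p /\ forall i, M i = locc_effect p i.

Definition success (I : finType) (n : nat) (eta : 'I_n -> R) (rho M : 'I_n -> op I)
  : C := \sum_(i < n) (eta i)%:C * trace (opmul (rho i) (M i)).

Definition p_G (I : finType) (n : nat) (eta : 'I_n -> R) (rho : 'I_n -> op I) : R :=
  sup [set r : R | exists M, measurement M /\ success eta rho M = r%:C]%classic.

Definition p_SEP (m : nat) (d : 'I_m -> nat) (n : nat) (eta : 'I_n -> R)
  (rho : 'I_n -> op (idx d)) : R :=
  sup [set r : R | exists M, sep_measurement M /\ success eta rho M = r%:C]%classic.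

Definition p_L (m : nat) (d : 'I_m -> nat) (n : nat) (eta : 'I_n -> R)
  (rho : 'I_n -> op (idx d)) : R :=
  sup [set r : R | exists M, locc_measurement M /\ success eta rho M = r%:C]%classic.

End QDefs.

(* Main.v *)
Require Import Defs.
From HB Require Import structures.
From mathcomp Require Import all_boot all_order all_algebra.
From mathcomp Require Import complex.
From mathcomp Require Import classical_sets reals.
From mathcomp Require Import ring sesquilinear spectral.
Import Order.TTheory GRing.Theory Num.Theory.
Local Open Scope ring_scope.
Local Open Scope complex_scope.

Set Implicit Arguments. Unset Strict Implicit. Unset Printing Implicit Defensive.

Lemma prod_sum_dffun (R' : comNzRingType) (I : finType) (T_ : I -> finType)
  (f : forall i, T_ i -> R') :
  \prod_(i : I) \sum_(a : T_ i) f i a =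
  \sum_(t : {dffun forall i, T_ i}) \prod_(i : I) f i (t i).
Proof.
transitivity (\prod_(i : I) \sum_(j : {i & T_ i} | j \in tagged_with T_ i)
   untag 0 (f i) j).
  by apply: eq_bigr => i _; rewrite (big_tag f i).
rewrite bigA_distr_big_dep.
rewrite (reindex (@dffun_of_fprod I T_)); last first.
  by apply: onW_bij; apply: dffun_of_fprod_bij.
have := @big_fprod R' 0 1 *%R +%R I T_ (fun i => [ffun a => f i a]).
move=> E.
transitivity (\sum_(t : fprod T_) \prod_(i in I) [ffun a => f i a] (t i)).
  rewrite E; apply: eq_bigr => g _; apply: eq_bigr => i _.
  by case: (g i) => j a /=; rewrite /untag; case: eqP => // e; rewrite ffunE.
apply: eq_bigr => t _; apply: eq_bigr => i _; rewrite ffunE.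
by rewrite /dffun_of_fprod ffunE.
Qed.

Set Implicit Arguments. Unset Strict Implicit. Unset Printing Implicit Defensive.

Section Ops.
Variable R : realType.
Local Notation C := R[i].

Lemma opext (I : finType) (A B : op R I) : (forall i j, A i j = B i j) -> A = B.
Proof. by move=> h; apply: boolp.funext => i; apply: boolp.funext => j; apply: h. Qed.

Lemma trace_mul_sum (I J : finType) (X : op R I) (F : J -> op R I) :
  trace (opmul X (opsum F)) = \sum_(s : J) trace (opmul X (F s)).
Proof.
rewrite /trace /opmul /opsum.
under eq_bigr do under eq_bigr do rewrite mulr_sumr.
rewrite [RHS]exchange_big; apply: eq_bigr => a _; by rewrite [RHS]exchange_big.
Qed.

Lemma trace_mul_lin (I : finType) (c1 c2 : C) (A B M : op R I) :
  trace (opmul (fun a b => c1 * A a b - c2 * B a b) M) =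
  c1 * trace (opmul A M) - c2 * trace (opmul B M).
Proof.
rewrite /trace /opmul !mulr_sumr -sumrB; apply: eq_bigr => a _.
rewrite !mulr_sumr -sumrB; apply: eq_bigr => b _.
by rewrite mulrBl !mulrA.
Qed.

Lemma trace_mul1 (I : finType) (A : op R I) : trace (opmul A (@op1 R I)) = trace A.
Proof.
rewrite /trace /opmul /op1; apply: eq_bigr => a _.
rewrite (bigD1 a) //= eqxx mulr1 big1 ?addr0 // => b /negbTE nb.
by rewrite (negbTE (negbT nb)) mulr0 || (rewrite eq_sym nb mulr0 //).
Qed.

Lemma trace_mul_scale (I : finType) (c : C) (A B : op R I) :
  trace (opmul A (fun a b => c * B a b)) = c * trace (opmul A B).
Proof.
rewrite /trace /opmul mulr_sumr; apply: eq_bigr => a _.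
rewrite mulr_sumr; apply: eq_bigr => b _; by rewrite mulrCA.
Qed.

Lemma trace_mul_sub1 (I : finType) (A B : op R I) :
  trace (opmul A (fun a b => (@op1 R I) a b - B a b)) = trace A - trace (opmul A B).
Proof.
rewrite -[trace A]trace_mul1 /trace /opmul -sumrB; apply: eq_bigr => a _.
rewrite -sumrB; apply: eq_bigr => b _; by rewrite mulrBr.
Qed.

Lemma trace_mul0 (I : finType) (A : op R I) : trace (opmul A (@op0 R I)) = 0.
Proof. by rewrite /trace /opmul /op0 big1 // => a _; rewrite big1 // => b _; rewrite mulr0. Qed.

End Ops.

Set Implicit Arguments. Unset Strict Implicit. Unset Printing Implicit Defensive.

Section Tens.
Variable R : realType.
Local Notation C := R[i].
Variables (m : nat) (d : 'I_m -> nat).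
Local Notation T := (forall k : 'I_m, op R 'I_(d k)).

Unset Implicit Arguments.
Definition upd (i : idx d) (k : 'I_m) (u : 'I_(d k)) : idx d :=
  finfun (dfwith (fun l => i l) u).
Set Implicit Arguments.

Lemma upd_k (i : idx d) k u : upd i k u k = u.
Proof. by rewrite /upd ffunE dfwith_in. Qed.

Lemma upd_out (i : idx d) k u l : l != k -> upd i k u l = i l.
Proof. by move=> h; rewrite /upd ffunE dfwith_out // eq_sym. Qed.

Lemma tens_dfwith (F : T) k (A : op R 'I_(d k)) i j :
  tens (dfwith F A) i j = A (i k) (j k) * \prod_(l | l != k) F l (i l) (j l).
Proof.
rewrite /tens (bigD1 k) //= dfwith_in; congr (_ * _).
by apply: eq_bigr => l hl; rewrite dfwith_out // eq_sym.
Qed.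

Lemma tens_upd (F : T) k (i j : idx d) u v :
  tens F (upd i k u) (upd j k v) = F k u v * \prod_(l | l != k) F l (i l) (j l).
Proof.
rewrite /tens (bigD1 k) //= !upd_k; congr (_ * _).
by apply: eq_bigr => l hl; rewrite !upd_out.
Qed.

Lemma delta_embed k (i a : idx d) :
  \prod_(l | l != k) ((a l == i l)%:R : C) = \sum_(u : 'I_(d k)) ((a == upd i k u)%:R : C).
Proof.
case: (boolp.pselect (forall l, l != k -> a l = i l)) => [h|h].
  rewrite big1; last by move=> l hl; rewrite h // eqxx.
  rewrite (bigD1 (a k)) //=.
  have -> : a == upd i k (a k).
    apply/eqP/ffunP => l; case: (eqVneq l k) => [->|hl]; first by rewrite upd_k.
    by rewrite upd_out // h.
  rewrite big1 ?addr0 // => u hu; case: eqP => // e.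
  by move: hu; rewrite e upd_k eqxx.
have [l0 hl0 ne0] : exists2 l0, l0 != k & a l0 <> i l0.
  apply: boolp.contrapT => hn; apply: h => l hl.
  by apply: boolp.contrapT => hne; apply: hn; exists l.
rewrite (bigD1 l0) //=.
have -> : (a l0 == i l0) = false by apply/eqP.
rewrite mul0r big1 // => u _; case: eqP => // e.
by exfalso; apply: ne0; rewrite e upd_out.
Qed.

Lemma sum_embed k (i : idx d) (g : idx d -> C) :
  \sum_(a : idx d) (\prod_(l | l != k) ((a l == i l)%:R : C)) * g a =
  \sum_(u : 'I_(d k)) g (upd i k u).
Proof.
under eq_bigr do rewrite delta_embed mulr_suml.
rewrite exchange_big /=; apply: eq_bigr => u _.
rewrite (bigD1 (upd i k u)) //= eqxx mul1r big1 ?addr0 // => a /negbTE ->.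
by rewrite mul0r.
Qed.

Lemma conj_embed_tens (F : T) k (K : op R 'I_(d k)) :
  opmul (adj (embed K)) (opmul (tens F) (embed K)) =
  tens (dfwith F (opmul (adj K) (opmul (F k) K))).
Proof.
apply: opext => i j; rewrite tens_dfwith /opmul /adj /embed.
transitivity (\sum_(a : idx d) (\prod_(l | l != k) ((a l == i l)%:R : C)) *
   ((K (a k) (i k))^* * \sum_(b : idx d) (\prod_(l | l != k) ((b l == j l)%:R : C)) *
     (tens F a b * K (b k) (j k)))).
  apply: eq_bigr => a _; rewrite rmorphM /= rmorph_prod /=.
  have hc : forall (b : bool), ((b%:R : C)^*)%C = b%:R by move=> b; rewrite conjc_nat.
  under eq_bigr do rewrite hc.
  rewrite !mulr_sumr; apply: eq_bigr => b _; ring.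
rewrite sum_embed mulr_suml; apply: eq_bigr => u _.
rewrite sum_embed upd_k !mulr_sumr mulr_suml; apply: eq_bigr => v _.
rewrite upd_k tens_upd; ring.
Qed.

End Tens.

Set Implicit Arguments. Unset Strict Implicit. Unset Printing Implicit Defensive.

Section Psd.
Variable R : realType.
Local Notation C := R[i].

Lemma psd_op1 (I : finType) : psd (@op1 R I).
Proof.
split.
  by move=> i j; rewrite /op1 conjc_nat eq_sym.
move=> v; apply: sumr_ge0 => i _.
rewrite (bigD1 i) //= /op1 eqxx mulr1 big1 ?addr0; last first.
  by move=> j /negbTE h; rewrite eq_sym h mulr0 mul0r.
by rewrite mulrC; apply: mulcJ_ge0.
Qed.

Lemma psd_op0 (I : finType) : psd (@op0 R I).
Proof.
split; first by move=> i j; rewrite /op0 conjc0.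
by move=> v; apply: sumr_ge0 => i _; apply: sumr_ge0 => j _; rewrite /op0 mulr0 mul0r.
Qed.

Lemma psd_scale (I : finType) (c : C) (A : op R I) : 0 <= c -> psd A ->
  psd (fun a b => c * A a b).
Proof.
move=> c0 [hA qA]; have cr : c^* = c by apply: conj_Creal; apply: ger0_real.
split; first by move=> i j; rewrite rmorphM /= cr hA.
move=> v; have := qA v => q.
have -> : \sum_i \sum_j (v i)^* * (c * A i j) * v j =
   c * \sum_i \sum_j (v i)^* * A i j * v j.
  rewrite mulr_sumr; apply: eq_bigr => i _; rewrite mulr_sumr.
  by apply: eq_bigr => j _; ring.
by apply: mulr_ge0.
Qed.

Lemma psd_conj (I : finType) (A K : op R I) : psd A ->
  psd (opmul (adj K) (opmul A K)).
Proof.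
move=> [hA qA]; split.
  move=> i j; rewrite /opmul /adj rmorph_sum /=.
  under [RHS]eq_bigr do rewrite rmorphM /= conjcK rmorph_sum /=.
  under eq_bigr do rewrite mulr_sumr.
  under [RHS]eq_bigr do rewrite mulr_sumr.
  rewrite [RHS]exchange_big /=; apply: eq_bigr => a _; apply: eq_bigr => b _.
  by rewrite rmorphM /= -hA; ring.
move=> v; have := qA (fun a => \sum_i K a i * v i).
have -> : \sum_a \sum_b (\sum_i K a i * v i)^* * A a b * (\sum_i K b i * v i) =
  \sum_a \sum_b \sum_i \sum_j (v i)^* * (K a i)^* * A a b * K b j * v j.
  apply: eq_bigr => a _; apply: eq_bigr => b _.
  rewrite rmorph_sum /= !mulr_suml; apply: eq_bigr => i _.
  rewrite mulr_sumr; apply: eq_bigr => j _; rewrite rmorphM /=; ring.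
have -> : \sum_i \sum_j (v i)^* * (opmul (adj K) (opmul A K)) i j * v j =
  \sum_i \sum_j \sum_a \sum_b (v i)^* * (K a i)^* * A a b * K b j * v j.
  apply: eq_bigr => i _; apply: eq_bigr => j _.
  rewrite /opmul /adj mulr_sumr mulr_suml; apply: eq_bigr => a _.
  rewrite !mulr_sumr !mulr_suml; apply: eq_bigr => b _; ring.
move=> h; apply: le_trans h _; rewrite le_eqVlt; apply/orP; left; apply/eqP.
under eq_bigr do rewrite exchange_big /=.
under eq_bigr do under eq_bigr do rewrite exchange_big /=.
rewrite exchange_big /=.
by under eq_bigr do rewrite exchange_big /=.
Qed.

End Psd.

Set Implicit Arguments. Unset Strict Implicit. Unset Printing Implicit Defensive.

Section Sep.
Variable R : realType.
Local Notation C := R[i].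

Lemma conj_sum (I J : finType) (A B : op R I) (F : J -> op R I) :
  opmul A (opmul (opsum F) B) = opsum (fun s => opmul A (opmul (F s) B)).
Proof.
apply: opext => i j; rewrite /opmul /opsum.
under eq_bigr do under eq_bigr do rewrite mulr_suml.
under eq_bigr do rewrite exchange_big mulr_sumr.
by rewrite exchange_big.
Qed.

Lemma conj_op0 (I : finType) (A B : op R I) : opmul A (opmul (@op0 R I) B) = @op0 R I.
Proof.
apply: opext => i j; rewrite /opmul /op0 big1 // => a _.
by rewrite big1 ?mulr0 // => b _; rewrite mul0r.
Qed.

Lemma opmul1l (I : finType) (A : op R I) : opmul (@op1 R I) A = A.
Proof.
apply: opext => i j; rewrite /opmul /op1 (bigD1 i) //= eqxx mul1r big1 ?addr0 //.
by move=> a /negbTE h; rewrite eq_sym h mul0r.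
Qed.

Lemma opsum_exchange (I J K : finType) (F : J -> K -> op R I) :
  opsum (fun j => opsum (F j)) = opsum (fun k => opsum (fun j => F j k)).
Proof. by apply: opext => a b; rewrite /opsum exchange_big. Qed.

Variables (m : nat) (d : 'I_m -> nat).
Local Notation T := (forall k : 'I_m, op R 'I_(d k)).
Local Notation ones := (fun k : 'I_m => @op1 R 'I_(d k)).

Lemma tens_one : tens ones = @op1 R (idx d).
Proof.
apply: opext => i j; rewrite /tens /op1.
case: (eqVneq i j) => [->|ne].
  by rewrite big1 ?eqxx // => k _; rewrite eqxx.
have [k hk] : exists k, i k != j k.
  apply: boolp.contrapT => hn; move/eqP: ne; apply; apply/ffunP => k.
  by apply/eqP; apply: boolp.contrapT => h; apply: hn; exists k; apply/negP.
rewrite (bigD1 k) //= (negbTE hk) mul0r; case: (@eqP _ i j) => // e.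
Qed.

Lemma dfwith_same (F : T) k : dfwith F (F k) = F.
Proof.
apply: boolp.functional_extensionality_dep => l.
by case: dfwithP.
Qed.

Lemma psd_dfwith (F : T) k (A : op R 'I_(d k)) :
  (forall l, psd (F l)) -> psd A -> forall l, psd (dfwith F A l).
Proof. by move=> hF hA l; case: dfwithP. Qed.

Lemma tens_dfwith_sum (F : T) k (J : finType) (G : J -> op R 'I_(d k)) :
  tens (dfwith F (opsum G)) = opsum (fun j => tens (dfwith F (G j))).
Proof.
apply: opext => i j; rewrite tens_dfwith /opsum mulr_suml.
by apply: eq_bigr => s _; rewrite tens_dfwith.
Qed.

Lemma sep0 : separable (@op0 R (idx d)).
Proof.
exists 0%N, (fun _ => ones); split; first by move=> s; case: s.
by apply: opext => i j; rewrite /opsum big_ord0.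
Qed.

Lemma sep_tens (F : T) : (forall k, psd (F k)) -> separable (tens F).
Proof.
move=> hF; exists 1%N, (fun _ => F); split => //.
by apply: opext => i j; rewrite /opsum big_ord1.
Qed.

Lemma sep1 : separable (@op1 R (idx d)).
Proof. by rewrite -tens_one; apply: sep_tens => k; apply: psd_op1. Qed.

Lemma sep_add (A B : op R (idx d)) : separable A -> separable B ->
  separable (fun i j => A i j + B i j).
Proof.
move=> [S1 [F1 [h1 ->]]] [S2 [F2 [h2 ->]]].
exists (S1 + S2)%N, (fun s => match split s with inl a => F1 a | inr b => F2 b end).
split; first by move=> s k; case: (split s).
apply: opext => i j; rewrite /opsum big_split_ord /=.
congr (_ + _); apply: eq_bigr => s _.
  by rewrite -[lshift _ s]/(unsplit (inl s)) unsplitK.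
by rewrite -[rshift _ s]/(unsplit (inr s)) unsplitK.
Qed.

Lemma sep_sum (J : nat) (F : 'I_J -> op R (idx d)) :
  (forall j, separable (F j)) -> separable (opsum F).
Proof.
elim: J F => [|J IH] F hF.
  have -> : opsum F = @op0 R (idx d) by apply: opext => i j; rewrite /opsum big_ord0.
  exact: sep0.
have -> : opsum F = fun i j => opsum (fun s : 'I_J => F (widen_ord (leqnSn J) s)) i j
                               + F ord_max i j.
  by apply: opext => i j; rewrite /opsum big_ord_recr.
apply: sep_add => //; apply: IH => s; apply: hF.
Qed.

Lemma sep_conj k (K : op R 'I_(d k)) (E : op R (idx d)) : separable E ->
  separable (opmul (adj (embed K)) (opmul E (embed K))).
Proof.
move=> [S [F [hF ->]]]; rewrite conj_sum.
apply: sep_sum => s; rewrite conj_embed_tens; apply: sep_tens.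
by apply: psd_dfwith => //; apply: psd_conj.
Qed.

Lemma conj_embed_one k (K : op R 'I_(d k)) :
  opmul (adj (embed K)) (opmul (@op1 R (idx d)) (embed K)) =
  tens (dfwith ones (opmul (adj K) K)).
Proof. by rewrite -{1}tens_one conj_embed_tens opmul1l. Qed.

Lemma locc_props n (p : locc_proto R d n) : locc_valid p ->
  opsum (locc_effect p) = @op1 R (idx d) /\ forall i, separable (locc_effect p i).
Proof.
elim: p => [l|k J K next IH] /=.
  move=> _; split; last by move=> i; case: eqP => _; [apply: sep1 | apply: sep0].
  apply: opext => a b; rewrite /opsum (bigD1 l) //= eqxx big1 ?addr0 //.
  by move=> i /negbTE; rewrite eq_sym => ->.
move=> [hK hv]; split; last first.
  move=> i; apply: sep_sum => j; apply: sep_conj; exact: (proj2 (IH j (hv j)) i).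
rewrite opsum_exchange.
have -> : (fun j => opsum (fun i => opmul (adj (embed (K j)))
            (opmul (locc_effect (next j) i) (embed (K j))))) =
          (fun j => tens (dfwith ones (opmul (adj (K j)) (K j)))).
  apply: boolp.funext => j; rewrite -conj_sum (proj1 (IH j (hv j))).
  exact: conj_embed_one.
by rewrite -tens_dfwith_sum hK dfwith_same tens_one.
Qed.

End Sep.

Set Implicit Arguments. Unset Strict Implicit. Unset Printing Implicit Defensive.

Section Spec.
Variable R : realType.
Local Notation C := R[i].

Definition rk1 (I : finType) (w : I -> C) : op R I := fun a b => w a * (w b)^*.

Lemma psd_decomp n (A : op R 'I_n) : psd A -> exists (lam : 'I_n -> C)
  (u : 'I_n -> 'I_n -> C), (forall j, 0 <= lam j) /\
  A = opsum (fun j a b => lam j * rk1 (u j) a b).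
Proof.
move=> [hA qA].
pose M : 'M[C]_n := \matrix_(a, b) A a b.
have MtM : (map_mx Num.conj (M^T)) = M.
  by apply/matrixP => a b; rewrite !mxE hA; apply: conjcK.
have Mn : M \is normalmx by rewrite qualifE MtM.
have /orthomx_spectralP := Mn.
set P := spectralmx M; set s := spectral_diag M => eM.
have Pu : P \is unitarymx by apply: spectral_unitarymx.
have PPt : P *m (map_mx Num.conj (P^T)) = 1%:M by apply/unitarymxP.
rewrite invmx_unitary // in eM.
have Aab : forall a b, A a b = \sum_j (P j a)^* * s 0 j * P j b.
  move=> a b; have := congr1 (fun N : 'M[C]_n => N a b) eM; rewrite /= mxE => ->.
  rewrite !mxE; apply: eq_bigr => j _; rewrite !mxE.
  rewrite (bigD1 j) //= big1 ?addr0; last first.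
    by move=> l /negbTE h; rewrite !mxE h mulr0n mulr0.
  by rewrite !mxE eqxx mulr1n.
exists (fun j => s 0 j), (fun j a => (P j a)^*); split; last first.
  apply: opext => a b; rewrite Aab /opsum; apply: eq_bigr => j _.
  by rewrite /rk1 conjCK; ring.
move=> j; have := qA (fun a => (P j a)^*).
have -> : \sum_a \sum_b ((P j a)^*)^* * A a b * (P j b)^* =
   (P *m M *m (map_mx Num.conj (P^T))) j j.
  rewrite mxE exchange_big; apply: eq_bigr => b _; rewrite mxE mulr_suml.
  apply: eq_bigr => a _; by rewrite !mxE conjCK.
rewrite eM !mulmxA PPt mul1mx -mulmxA PPt mulmx1 mxE eqxx mulr1n //.
Qed.

End Spec.

Set Implicit Arguments. Unset Strict Implicit. Unset Printing Implicit Defensive.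

Section Multi.
Variable R : realType.
Local Notation C := R[i].

Lemma sum_deltar (I : finType) (f : I -> C) p : \sum_j f j * ((j == p)%:R : C) = f p.
Proof.
rewrite (bigD1 p) //= eqxx mulr1 big1 ?addr0 // => j /negbTE h.
by rewrite h mulr0.
Qed.

Lemma cr1 (c : C) : 0 <= c -> conjc c = c.
Proof. by move=> h; apply: (conj_Creal (ger0_real h)). Qed.
Lemma cr2 (c : C) : 0 <= c -> Num.conj c = c.
Proof. by move=> h; apply: (conj_Creal (ger0_real h)). Qed.

Lemma conjb (b : bool) : ((b%:R : C)^*) = b%:R.
Proof. exact: conjc_nat. Qed.

Lemma sum_deltal (I : finType) (f : I -> C) p :
  \sum_j (((j == p)%:R : C)^*) * f j = f p.
Proof.
under eq_bigr do rewrite conjC_nat.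
rewrite (bigD1 p) //= eqxx mul1r big1 ?addr0 // => j /negbTE h.
by rewrite h mul0r.
Qed.

Lemma psd_rk1 (I : finType) (w : I -> C) : psd (rk1 w).
Proof.
split; first by move=> i j; rewrite /rk1 rmorphM /= ?conjcK ?conjCK mulrC.
move=> v.
have -> : \sum_i \sum_j (v i)^* * rk1 w i j * v j =
   (\sum_i (v i)^* * w i) * (\sum_i (v i)^* * w i)^*.
  rewrite mulr_suml; apply: eq_bigr => i _; rewrite rmorph_sum mulr_sumr.
  by apply: eq_bigr => j _; rewrite /rk1 rmorphM /= ?conjcK ?conjCK; ring.
exact: mulcJ_ge0.
Qed.

Lemma psd_sumscale (I : finType) n (c : 'I_n -> C) (E : 'I_n -> op R I) :
  (forall j, 0 <= c j) -> (forall j, psd (E j)) ->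
  psd (opsum (fun j a b => c j * E j a b)).
Proof.
move=> hc hE; split.
  move=> a b; rewrite /opsum rmorph_sum; apply: eq_bigr => j _.
  rewrite rmorphM /= ?(cr1 (hc j)) ?(cr2 (hc j)); congr (_ * _).
  by case: (hE j) => h _; rewrite h.
move=> v.
have -> : \sum_i \sum_j (v i)^* * opsum (fun j a b => c j * E j a b) i j * v j =
  \sum_s c s * \sum_i \sum_j (v i)^* * E s i j * v j.
  rewrite /opsum.
  under eq_bigr do under eq_bigr do rewrite mulr_sumr mulr_suml.
  under eq_bigr do rewrite exchange_big /=.
  rewrite exchange_big /=; apply: eq_bigr => s _.
  rewrite mulr_sumr; apply: eq_bigr => i _; rewrite mulr_sumr.
  by apply: eq_bigr => j _; ring.
apply: sumr_ge0 => s _; apply: mulr_ge0 => //; by case: (hE s).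
Qed.

Variables (m : nat) (d : 'I_m -> nat).
Local Notation T := (forall k : 'I_m, op R 'I_(d k)).

Lemma multilin (Pr : op R (idx d) -> Prop)
 (hcl : forall n (c : 'I_n -> C) (E : 'I_n -> op R (idx d)),
    (forall j, 0 <= c j) -> (forall j, Pr (E j)) ->
    Pr (opsum (fun j a b => c j * E j a b)))
 (hrk : forall w : forall k, 'I_(d k) -> C, Pr (tens (fun k => rk1 (w k)))) :
 forall F : T, (forall k, psd (F k)) -> Pr (tens F).
Proof.
suff H : forall (ks : seq 'I_m) (F : T) (w : forall k, 'I_(d k) -> C),
    (forall k, psd (F k)) -> (forall k, k \notin ks -> F k = rk1 (w k)) ->
    Pr (tens F).
  move=> F hF; apply: (H (enum 'I_m) F (fun k a => 0)) => // k.
  by rewrite mem_enum.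
elim=> [|k ks IH] F w hF hk.
  have -> : F = (fun k => rk1 (w k)) by apply: boolp.functional_extensionality_dep => l; apply: hk.
  exact: hrk.
have [lam [u [hl eF]]] := psd_decomp (hF k).
rewrite -(dfwith_same F k) eF tens_dfwith_sum.
have -> : opsum (fun j => tens (dfwith F (fun a b => lam j * rk1 (u j) a b))) =
   opsum (fun j a b => lam j * tens (dfwith F (rk1 (u j))) a b).
  by apply: opext => a b; apply: eq_bigr => j _; rewrite !tens_dfwith mulrA.
apply: hcl => // j.
apply: (IH _ (dfwith w (u j))).
  by apply: psd_dfwith => //; apply: psd_rk1.
move=> l hl'; case: (eqVneq k l) => [e|ne].
  by subst l; rewrite !dfwith_in.
rewrite !dfwith_out //; apply: hk; rewrite in_cons negb_or hl' andbT.
by rewrite eq_sym.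
Qed.

Lemma tens_rk1 (w : forall k, 'I_(d k) -> C) :
  tens (fun k => rk1 (w k)) = rk1 (fun i : idx d => \prod_k w k (i k)).
Proof.
apply: opext => i j; rewrite /tens /rk1 big_split /= rmorph_prod.
by [].
Qed.

Lemma tens_psd (F : T) : (forall k, psd (F k)) -> psd (tens F).
Proof.
apply: multilin; first by move=> n c E; apply: psd_sumscale.
by move=> w; rewrite tens_rk1; apply: psd_rk1.
Qed.

Lemma tens_trace (F : T) : trace (tens F) = \prod_k trace (F k).
Proof.
rewrite /trace /tens (prod_sum_dffun (fun k a => F k a a)) //.
Qed.

End Multi.

Set Implicit Arguments. Unset Strict Implicit. Unset Printing Implicit Defensive.

Section Bound.
Variable R : realType.
Local Notation C := R[i].

Lemma conjbc (b : bool) : conjc ((b%:R : C)) = b%:R.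
Proof. exact: conjc_nat. Qed.

Lemma sum_deltalc (I : finType) (f : I -> C) p :
  \sum_j (conjc ((j == p)%:R : C)) * f j = f p.
Proof.
under eq_bigr do rewrite conjbc.
rewrite (bigD1 p) //= eqxx mul1r big1 ?addr0 // => j /negbTE h.
by rewrite h mul0r.
Qed.

Lemma psd_diag (I : finType) (A : op R I) p : psd A -> 0 <= A p p.
Proof.
move=> [_ qA]; have := qA (fun a => (a == p)%:R).
have -> : \sum_i \sum_j conjc ((i == p)%:R : C) * A i j * ((j == p)%:R) = A p p.
  under eq_bigr do rewrite sum_deltar.
  by rewrite sum_deltalc.
by [].
Qed.

Lemma quad2 (I : finType) (A : op R I) p q (t : C) :
  \sum_i \sum_j conjc (t * (i == p)%:R + (i == q)%:R) * A i j * (t * (j == p)%:R + (j == q)%:R)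
  = conjc t * (A p p * t + A p q) + (A q p * t + A q q).
Proof.
have e1 : forall i, \sum_j conjc (t * (i == p)%:R + (i == q)%:R) * A i j * (t * (j == p)%:R + (j == q)%:R)
   = conjc (t * (i == p)%:R + (i == q)%:R) * (A i p * t + A i q).
  move=> i; set c := conjc _.
  transitivity (\sum_j ((c * A i j * t) * (j == p)%:R + (c * A i j) * (j == q)%:R)).
    by apply: eq_bigr => j _; ring.
  rewrite big_split /= !sum_deltar; ring.
under eq_bigr do rewrite e1.
transitivity (\sum_i (conjc ((i == p)%:R : C) * (conjc t * (A i p * t + A i q)) +
     conjc ((i == q)%:R : C) * (A i p * t + A i q))).
  by apply: eq_bigr => i _; rewrite rmorphD rmorphM /=; ring.
by rewrite big_split /= !sum_deltalc.
Qed.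

Lemma psd_tr0 (I : finType) (A : op R I) : psd A -> trace A = 0 -> A = @op0 R I.
Proof.
move=> hA htr.
have hd : forall p, A p p = 0.
  move=> p; apply: (psumr_eq0P (P := predT) (F := fun i => A i i)) => //.
  by move=> i _; apply: psd_diag.
apply: opext => p q; rewrite /op0.
case: (eqVneq p q) => [<-|ne]; first exact: hd.
have [hh qA] := hA.
have := qA (fun a => (- A p q) * (a == p)%:R + (a == q)%:R).
rewrite quad2 !hd (hh p q).
set z := conjc (A p q) * A p q.
have -> : conjc (- A p q) * (0 * - A p q + A p q) + (conjc (A p q) * - A p q + 0) = - (z + z).
  rewrite /z rmorphN /=; ring.
rewrite oppr_ge0 => hz.
have z0 : 0 <= z by rewrite /z mulrC; apply: mulcJ_ge0.
have : z = 0.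
  apply: le_anti; rewrite z0 andbT; apply: le_trans hz.
  by rewrite lerDr.
by move/eqP; rewrite mulf_eq0 conjc_eq0 orbb => /eqP.
Qed.

Lemma sup_eq_max (S : set R) a : S a -> (forall r, S r -> r <= a) -> sup S = a.
Proof.
move=> Sa hub.
have hs : has_sup S by split; [exists a | exists a => r /hub].
apply: le_anti; apply/andP; split.
  by apply: ge_sup; [exists a | move=> r /hub].
by apply: sup_upper_bound.
Qed.

Variables (m : nat) (d : 'I_m -> nat).
Local Notation T := (forall k : 'I_m, op R 'I_(d k)).

Lemma bp_tens (k0 : 'I_m) (X : op R (idx d)) (F : T) : block_positive X ->
  (forall k, psd (F k)) -> 0 <= trace (opmul X (tens F)).
Proof.
move=> [hX bX] hF.
have t0 : forall k, 0 <= trace (F k).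
  by move=> k; apply: sumr_ge0 => a _; apply: psd_diag.
case: (boolp.pselect (exists k, trace (F k) = 0)) => [[k hk]|hn].
  have Fk := psd_tr0 (hF k) hk.
  have -> : tens F = @op0 R (idx d).
    by apply: opext => i j; rewrite /tens (bigD1 k) //= Fk /op0 mul0r.
  by rewrite trace_mul0.
set P := \prod_k trace (F k).
have P0 : P != 0.
  apply/prodf_neq0 => k _; apply/eqP => h; apply: hn; by exists k.
have Pp : 0 < P by rewrite lt_def P0 /P prodr_ge0.
pose s := tens (dfwith F (fun a b => P^-1 * F k0 a b)).
have es : s = fun i j => P^-1 * tens F i j.
  apply: opext => i j.
  have tF : tens F i j = F k0 (i k0) (j k0) * \prod_(l | l != k0) F l (i l) (j l).
    by rewrite /tens (bigD1 k0).
  rewrite /s tens_dfwith tF; ring.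
have hps : forall l, psd (dfwith F (fun a b => P^-1 * F k0 a b) l).
  apply: psd_dfwith => //; apply: psd_scale => //.
  by rewrite invr_ge0 ltW.
have trs : trace s = 1.
  rewrite es /trace -mulr_sumr -/(trace (tens F)) tens_trace -/P.
  by rewrite mulVf.
have := bX s (sep_tens hps) (conj (tens_psd hps) trs).
rewrite es trace_mul_scale => h.
have -> : trace (opmul X (tens F)) = P * (P^-1 * trace (opmul X (tens F))).
  by rewrite mulrA mulfV // mul1r.
by apply: mulr_ge0; [apply: ltW | exact: h].
Qed.

Lemma bp_sep (k0 : 'I_m) (X M : op R (idx d)) : block_positive X -> separable M ->
  0 <= trace (opmul X M).
Proof.
move=> hX [S [F [hF ->]]]; rewrite trace_mul_sum.
by apply: sumr_ge0 => s _; apply: (bp_tens k0).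
Qed.

Lemma sep_bound (k0 : 'I_m) n (eta : 'I_n -> R) (rho M : 'I_n -> op R (idx d)) x r :
  trace (rho x) = 1 ->
  (forall i, block_positive (fun a b => (eta x)%:C * rho x a b - (eta i)%:C * rho i a b)) ->
  opsum M = @op1 R (idx d) -> (forall i, separable (M i)) ->
  success eta rho M = r%:C -> r <= eta x.
Proof.
move=> tr1 hb hM hs hsucc.
have key : forall i, (eta i)%:C * trace (opmul (rho i) (M i)) =
  (eta x)%:C * trace (opmul (rho x) (M i)) -
  trace (opmul (fun a b => (eta x)%:C * rho x a b - (eta i)%:C * rho i a b) (M i)).
  by move=> i; rewrite trace_mul_lin; ring.
move: hsucc; rewrite /success.
under eq_bigr do rewrite key.
rewrite sumrB -mulr_sumr -trace_mul_sum hM trace_mul1 tr1 mulr1 => e.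
rewrite -lecR -e gerBl.
by apply: sumr_ge0 => i _; apply: (bp_sep k0).
Qed.

End Bound.

Set Implicit Arguments. Unset Strict Implicit. Unset Printing Implicit Defensive.

Section Locc.
Variable R : realType.
Local Notation C := R[i].

Definition opsub (I : finType) (A B : op R I) : op R I := fun a b => A a b - B a b.

Lemma conj_sub (I : finType) (A B K : op R I) :
  opmul (adj K) (opmul (opsub A B) K) =
  opsub (opmul (adj K) (opmul A K)) (opmul (adj K) (opmul B K)).
Proof.
apply: opext => a b; rewrite /opmul /opsub -sumrB; apply: eq_bigr => l _.
rewrite -mulrBr -sumrB; congr (_ * _); apply: eq_bigr => l' _; by rewrite mulrBl.
Qed.

Lemma proj_compl (I : finType) (P : op R I) : adj P = P -> opmul P P = P ->
  adj (opsub (@op1 R I) P) = opsub (@op1 R I) P /\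
  opmul (opsub (@op1 R I) P) (opsub (@op1 R I) P) = opsub (@op1 R I) P.
Proof.
move=> hP hPP; split.
  apply: opext => a b; rewrite /adj /opsub rmorphB /= conjc_nat eq_sym.
  by have := congr1 (fun f => f a b) hP; rewrite /adj => ->.
apply: opext => a b; have := congr1 (fun f => f a b) hPP; rewrite /opmul /opsub => e.
transitivity (\sum_l ((@op1 R I) a l * (@op1 R I) l b - (@op1 R I) a l * P l b
   - P a l * (@op1 R I) l b + P a l * P l b)).
  by apply: eq_bigr => l _; ring.
rewrite !big_split /= !sumrN e.
have -> : \sum_l (@op1 R I) a l * (@op1 R I) l b = (@op1 R I) a b.
  by have := congr1 (fun f => f a b) (opmul1l (@op1 R I)); rewrite /opmul.
have -> : \sum_l (@op1 R I) a l * P l b = P a b.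
  by have := congr1 (fun f => f a b) (opmul1l P); rewrite /opmul.
have -> : \sum_l P a l * (@op1 R I) l b = P a b.
  rewrite /op1 (bigD1 b) //= eqxx mulr1 big1 ?addr0 // => l /negbTE h.
  by rewrite h mulr0.
ring.
Qed.

Variables (m : nat) (d : 'I_m -> nat) (n : nat) (x i0 : 'I_n).
Unset Implicit Arguments.
Variable P : forall k : 'I_m, op R 'I_(d k).
Local Notation ones := (fun k : 'I_m => @op1 R 'I_(d k)).

Definition Kr (k : 'I_m) (j : 'I_2) : op R 'I_(d k) :=
  if j == ord0 then P k else opsub (@op1 R _) (P k).

Fixpoint proto (ks : seq 'I_m) : locc_proto R d n :=
  match ks with
  | [::] => LLeaf R d i0
  | k :: ks' => LNode (Kr k) (fun j : 'I_2 => if j == ord0 then proto ks' else LLeaf R d x)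
  end.

Definition Gs (ks : seq 'I_m) : op R (idx d) :=
  tens (fun k => if k \in ks then P k else @op1 R 'I_(d k)).

Hypothesis hP : forall k, adj (P k) = P k.
Hypothesis hPP : forall k, opmul (P k) (P k) = P k.
Hypothesis xi : x != i0.

Lemma proto_valid ks : locc_valid (proto ks).
Proof.
elim: ks => [|k ks IH] //=; split; last by move=> j; case: ifP.
have [h1 h2] := proj_compl (hP k) (hPP k).
apply: opext => a b; rewrite /opsum big_ord_recl big_ord1 /Kr /=.
rewrite hP hPP h1 h2 /opsub.
by rewrite /= subrKC.
Qed.

Lemma proto_effect ks : uniq ks -> forall i,
  locc_effect (proto ks) i =
  if i == i0 then Gs ks else if i == x then opsub (@op1 R (idx d)) (Gs ks)
  else @op0 R (idx d).
Proof.
elim: ks => [|k ks IH] /=.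
  move=> _ i; have G0 : Gs [::] = @op1 R (idx d).
    by rewrite /Gs -(tens_one R d); congr tens.
  rewrite G0; case: (eqVneq i i0) => [e|ne] //=.
  case: (eqVneq i x) => [_|_] //.
  by apply: opext => a b; rewrite /opsub subrr.
move=> /andP[kks uks] i.
have s2 : forall (F : 'I_2 -> op R (idx d)), opsum F = fun a b => F ord0 a b + F (lift ord0 ord0) a b.
  by move=> F; apply: opext => a b; rewrite /opsum big_ord_recl big_ord1.
rewrite s2 /= /Kr /=.
rewrite (IH uks i).
have Gks : (fun l => if l \in ks then P l else @op1 R 'I_(d l)) =
           @dfwith _ (fun l : 'I_m => op R 'I_(d l)) (fun l => if l \in ks then P l else @op1 R 'I_(d l)) k (@op1 R _).
  apply: boolp.functional_extensionality_dep => l.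
  case: (eqVneq k l) => [<-|ne]; first by rewrite dfwith_in (negbTE kks).
  by rewrite dfwith_out.
have Gkks : (fun l => if l \in k :: ks then P l else @op1 R 'I_(d l)) =
           @dfwith _ (fun l : 'I_m => op R 'I_(d l)) (fun l => if l \in ks then P l else @op1 R 'I_(d l)) k (P k).
  apply: boolp.functional_extensionality_dep => l.
  case: (eqVneq k l) => [<-|ne]; first by rewrite dfwith_in in_cons eqxx.
  by rewrite dfwith_out // in_cons eq_sym (negbTE ne).
have c1 : opmul (adj (embed (P k))) (opmul (Gs ks) (embed (P k))) = Gs (k :: ks).
  rewrite /Gs Gks conj_embed_tens dfwith_in opmul1l hP hPP Gkks.
  congr tens; apply: boolp.functional_extensionality_dep => l.
  by case: (eqVneq k l) => [<-|ne]; [rewrite !dfwith_in | rewrite !dfwith_out].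
have [h1 h2] := proj_compl (hP k) (hPP k).
case: (eqVneq i i0) => [ei|ni].
  subst i; rewrite (negbTE xi) conj_op0 c1.
  by apply: opext => a b; rewrite /op0 addr0.
case: (eqVneq i x) => [ex|nx].
  subst i; rewrite ?eqxx /=.
  rewrite conj_sub c1 !conj_embed_one h1 h2 hP hPP.
  apply: opext => a b; rewrite /opsub !tens_dfwith.
  have -> : @op1 R (idx d) a b = @op1 R 'I_(d k) (a k) (b k) *
      \prod_(l | l != k) @op1 R 'I_(d l) (a l) (b l).
    by rewrite -(tens_one R d) /tens (bigD1 k).
  rewrite /opsub; ring.
rewrite !conj_op0.
by apply: opext => a b; rewrite /op0 addr0.
Qed.

End Locc.

Set Implicit Arguments. Unset Strict Implicit. Unset Printing Implicit Defensive.

Section Main.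
Variable R : realType.
Local Notation C := R[i].

Lemma herm_X (I : finType) (a1 a2 : R) (A B : op R I) : herm A -> herm B ->
  herm (fun i j => a1%:C * A i j - a2%:C * B i j).
Proof.
move=> hA hB i j; rewrite (hA i j) (hB i j) rmorphB !rmorphM /= !oppr0.
by [].
Qed.

Lemma trace_rk1_real (I : finType) (X : op R I) (w : I -> C) : herm X ->
  conjc (trace (opmul X (rk1 w))) = trace (opmul X (rk1 w)).
Proof.
move=> hX; rewrite /trace /opmul /rk1 rmorph_sum /=.
under eq_bigr do rewrite rmorph_sum /=.
rewrite exchange_big /=; apply: eq_bigr => a _; apply: eq_bigr => b _.
by rewrite !rmorphM /= conjcK (hX b a); ring.
Qed.

Lemma rk1_opmul (I : finType) (w : I -> C) (c : C) :
  c * (\sum_l w l * conjc (w l)) = 1 ->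
  opmul (fun a b => c * rk1 w a b) (fun a b => c * rk1 w a b) =
  (fun a b => c * rk1 w a b).
Proof.
move=> hc; apply: opext => a b; rewrite /opmul /rk1.
transitivity (c * (w a * conjc (w b)) * (c * \sum_l w l * conjc (w l))).
  rewrite !mulr_sumr; apply: eq_bigr => l _; ring.
by rewrite hc mulr1.
Qed.

Lemma rk1_adj (I : finType) (w : I -> C) (c : C) : 0 <= c ->
  adj (fun a b => c * rk1 w a b) = (fun a b => c * rk1 w a b).
Proof.
move=> c0; apply: opext => a b; rewrite /adj /rk1 !rmorphM /= conjcK.
by rewrite (cr1 c0); ring.
Qed.

Lemma success_triv (I : finType) n (eta : 'I_n -> R) (rho : 'I_n -> op R I) x :
  trace (rho x) = 1 ->
  success eta rho (fun i => if x == i then @op1 R I else @op0 R I) = (eta x)%:C.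
Proof.
move=> tr1; rewrite /success (bigD1 x) //= eqxx trace_mul1 tr1 mulr1 big1 ?addr0 //.
by move=> i /negbTE; rewrite eq_sym => ->; rewrite trace_mul0 mulr0.
Qed.

Variables (m : nat) (d : 'I_m -> nat) (n : nat) (eta : 'I_n -> R)
  (rho : 'I_n -> op R (idx d)) (x : 'I_n).

Lemma has_sup_pL : p_L eta rho = eta x -> 0 < eta x ->
  has_sup [set r : R | exists M, locc_measurement M /\ success eta rho M = r%:C]%classic.
Proof.
move=> e hx; apply: boolp.contrapT => hn.
by move: e; rewrite /p_L sup_out // => h; move: hx; rewrite -h ltxx.
Qed.

Lemma neg_case : ensemble eta rho -> p_L eta rho = eta x -> forall i0, x != i0 ->
  forall w : forall k, 'I_(d k) -> C,
  (forall k, \sum_a w k a * conjc (w k a) != 0) ->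
  0 <= trace (opmul (fun a b => (eta x)%:C * rho x a b - (eta i0)%:C * rho i0 a b)
                  (rk1 (fun i : idx d => \prod_k w k (i k)))).
Proof.
move=> [heta [_ hrho]] hpl i0 ne w hn.
set X := (fun a b => _ - _).
set W := (fun i : idx d => _).
set v := trace (opmul X (rk1 W)).
have hX : herm X by apply: herm_X; [case: (hrho x) => [[]] | case: (hrho i0) => [[]]].
have vr : v \is Num.real by apply/CrealP; apply: trace_rk1_real.
have nk0 : forall k, 0 < \sum_a w k a * conjc (w k a).
  move=> k; rewrite lt_def hn /=; apply: sumr_ge0 => a _; exact: mulcJ_ge0.
pose c k := (\sum_a w k a * conjc (w k a))^-1.
have c0 : forall k, 0 <= c k by move=> k; rewrite invr_ge0 ltW.
have hc : forall k, c k * (\sum_a w k a * conjc (w k a)) = 1.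
  by move=> k; rewrite mulVf // hn.
pose P k : op R 'I_(d k) := fun a b => c k * rk1 (w k) a b.
have hP : forall k, adj (P k) = P k by move=> k; apply: rk1_adj.
have hPP : forall k, opmul (P k) (P k) = P k by move=> k; apply: rk1_opmul.
pose p := proto R m d n x i0 P (enum 'I_m).
pose M := locc_effect p.
have hM : locc_measurement M by exists p; split => //; apply: proto_valid.
have eff := @proto_effect R m d n x i0 P hP hPP ne (enum 'I_m) (enum_uniq 'I_m).
have eG : Gs R m d P (enum 'I_m) = fun a b => (\prod_k c k) * rk1 W a b.
  have -> : Gs R m d P (enum 'I_m) = tens P.
    rewrite /Gs; congr tens; apply: boolp.functional_extensionality_dep => k.
    by rewrite mem_enum.
  apply: opext => a b; rewrite /tens /P /rk1 /W !big_split /= rmorph_prod.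
  reflexivity.
have tr1 : trace (rho x) = 1 by case: (hrho x).
have succ : success eta rho M = (eta x)%:C - (\prod_k c k) * v.
  rewrite /success (bigD1 i0) //= (bigD1 x) /=; last exact: ne.
  rewrite big1 ?addr0; last first.
    move=> i /andP[h1 h2]; rewrite /M eff (negbTE h1) (negbTE h2).
    by rewrite trace_mul0 mulr0.
  rewrite /M !eff eqxx (negbTE ne) eqxx /opsub trace_mul_sub1 tr1.
  rewrite /v trace_mul_lin eG !trace_mul_scale; ring.
have cv_real : (\prod_k c k) * v \is Num.real.
  by apply: rpredM => //; apply: ger0_real; apply: prodr_ge0 => k _.
pose r := eta x - complex.Re ((\prod_k c k) * v).
have er : success eta rho M = r%:C.
  by rewrite succ /r rmorphB /= RRe_real.
have rle : r <= eta x.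
  have hs := has_sup_pL hpl (heta x).
  rewrite -hpl; apply: sup_upper_bound => //; by exists M.
rewrite (real_leNgt (real0 _) vr); apply/negP => vneg.
have : (\prod_k c k) * v < 0.
  have pc : 0 < \prod_k c k.
    rewrite lt_def; apply/andP; split; last by apply: prodr_ge0 => k _.
    by apply/prodf_neq0 => k _; rewrite invr_neq0 // hn.
  by rewrite pmulr_rlt0.
rewrite -(RRe_real cv_real) -(rmorph0 (real_complex R)) ltcR => hlt.
by move: rle; rewrite /r gerBl leNgt hlt.
Qed.

End Main.

Unset Implicit Arguments.

Lemma fwd (R : realType) (m : nat) (d : 'I_m -> nat) (n : nat)
  (eta : 'I_n -> R) (rho : 'I_n -> op R (idx d)) (x : 'I_n) :
  ensemble eta rho -> p_L eta rho = eta x -> forall i : 'I_n,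
  block_positive (fun a b => (eta x)%:C * rho x a b - (eta i)%:C * rho i a b).
Proof.
move=> hens hpl i; have [heta [_ hrho]] := hens.
split; first by apply: herm_X; [case: (hrho x) => [[]] | case: (hrho i) => [[]]].
move=> s [S [F [hF ->]]] _; rewrite trace_mul_sum; apply: sumr_ge0 => t _.
set X := (fun a b => _ - _).
apply: (@multilin R m d (fun E => 0 <= trace (opmul X E)) _ _ (F t) (hF t)).
  move=> k c E hc hE; rewrite trace_mul_sum; apply: sumr_ge0 => j _.
  by rewrite trace_mul_scale; apply: mulr_ge0.
move=> w.
case: (eqVneq x i) => [e|ne].
  by rewrite /X -e trace_mul_lin subrr.
case: (boolp.pselect (forall k, \sum_a w k a * conjc (w k a) != 0)) => [hn|hn].
  by rewrite tens_rk1; apply: neg_case.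
have [k hk] : exists k, \sum_a w k a * conjc (w k a) = 0.
  apply: boolp.contrapT => hh; apply: hn => k; apply/eqP => h; apply: hh.
  by exists k.
have z : rk1 (w k) = @op0 R _ by apply: psd_tr0; [apply: psd_rk1 | exact: hk].
have -> : tens (fun k => rk1 (w k)) = @op0 R (idx d).
  by apply: opext => a b; rewrite /tens (bigD1 k) //= z /op0 mul0r.
by rewrite trace_mul0.
Qed.

Theorem theorem1 (R : realType) (m : nat) (d : 'I_m -> nat) (n : nat)
  (eta : 'I_n -> R) (rho : 'I_n -> op R (idx d)) (x : 'I_n) :
  (2 <= m)%N -> (forall k, (2 <= d k)%N) -> ensemble eta rho ->
  (p_L eta rho = eta x <->
     forall i : 'I_n,
       block_positive (fun a b => (eta x)%:C * rho x a b - (eta i)%:C * rho i a b))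
  /\ (p_L eta rho = eta x -> p_L eta rho = p_SEP eta rho).
Proof.
move=> hm hd hens.
have k0 : 'I_m by exists 0%N; apply: leq_trans hm.
have [heta [_ hrho]] := hens.
have tr1 : trace (rho x) = 1 by case: (hrho x).
pose Mt := fun i : 'I_n => if x == i then @op1 R (idx d) else @op0 R (idx d).
have hMt : locc_measurement Mt by exists (LLeaf R d x).
have [sumMt sepMt] := @locc_props R m d n (LLeaf R d x) I.
have bwd : (forall i : 'I_n,
       block_positive (fun a b => (eta x)%:C * rho x a b - (eta i)%:C * rho i a b)) ->
    p_L eta rho = eta x /\ p_SEP eta rho = eta x.
  move=> hb; split; apply: sup_eq_max.
  - by exists Mt; split => //; apply: success_triv.
  - move=> r [M [[p [hv hMe]] hs]].
    have eM : M = locc_effect p by apply: boolp.funext => i; apply: hMe.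
    have [hsum hsep] := locc_props hv.
    by apply: (sep_bound k0 tr1 hb _ _ hs); rewrite eM.
  - exists Mt; split; last by apply: success_triv.
    split => //; split => // i; rewrite /Mt; case: eqP => _; [apply: psd_op1 | apply: psd_op0].
  - move=> r [M [[[_ hsum] hsep] hs]].
    exact: (sep_bound k0 tr1 hb hsum hsep hs).
split.
  split; first exact: fwd.
  by move=> hb; case: (bwd hb).
move=> hpl; have [h1 h2] := bwd (@fwd R m d n eta rho x hens hpl).
by rewrite h1 h2.
Qed.
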